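(* Let $E$, $\Lambda_\pm$, $\Lambda_+^*$, $\omega$, $\sigma'$ and $\pi_-\colon Q\to\mathbb P(\Lambda_-)$ be as in the context. Let $v=(\sigma,\tau)\in\Lambda_+\oplus\Lambda_+^*$ be a nonzero isotropic vector and let $\lambda=\tau/(\sigma\lrcorner\omega)\in\mathbb C\cup\{\infty\}$ (i.e. $\tau=\lambda\,\sigma\lrcorner\omega$ if $\sigma\ne0$, and $\lambda=\infty$ if $\sigma=0$). Then $\pi_-([v])$ is the line spanned by $(\sigma',\lambda\,\sigma'\lrcorner\omega)$ (interpreted as $(0,\sigma'\lrcorner\omega)$ if $\lambda=\infty$).
   Context: $E$ is a 4-dimensional complex vector space with nondegenerate symmetric bilinear form $q$; one connected component of the space of 2-dimensional isotropic subspaces is fixed and called positive, the other negative. Every isotropic line $\langle v\rangle$ lies in a unique positive maximal isotropic subspace $\Lambda_v^+$ and a unique negative one $\Lambda_v^-$. $\Lambda_+$ is a fixed positive and $\Lambda_-$ a fixed negative maximal isotropic subspace; $\Lambda_+\cap\Lambda_-$ is a line, spanned by $\sigma'$. $\Lambda'$ is a maximal isotropic subspace with $\Lambda_+\cap\Lambda'=0$, identified with $\Lambda_+^*$ via $q$, so $E=\Lambda_+\oplus\Lambda_+^*$ and $(\sigma,\tau)$ is isotropic iff $\tau(\sigma)=0$. $\omega\in\bigwedge^2\Lambda_+^*$ is nonzero and $\sigma\lrcorner\omega=\omega(\sigma,\cdot)\in\Lambda_+^*$; for isotropic $(\sigma,\tau)$, $\tau$ and $\sigma\lrcorner\omega$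 are proportional. $Q\subset\mathbb P(E)$ is the quadric of isotropic lines and $\pi_-\colon Q\to\mathbb P(\Lambda_-)$ is $[v]\mapsto\Lambda_v^+\cap\Lambda_-$. *)

(* Defs.v *)
From HB Require Import structures.
From mathcomp Require Import all_boot all_order all_algebra.
From mathcomp Require Import reals.
From mathcomp.real_closed Require Import complex.
Set Implicit Arguments. Unset Strict Implicit. Unset Printing Implicit Defensive.
Import Order.TTheory GRing.Theory Num.Theory.
Local Open Scope ring_scope.

(* Model: Lambda_+ = row vectors 'rV_2, Lambda_+^* = 'rV_2 with the pairing
   tau(sigma) = (sigma *m tau^T) 0 0, and E = Lambda_+ (+) Lambda_+^* realised as
   'rV_(2+2), the vector (sigma,tau) being row_mx sigma tau.  The form q is
   determined by Lambda_+ and Lambda' = Lambda_+^* being isotropic and the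
   identification Lambda' ~ Lambda_+^* via q:
   q((s,t),(s',t')) = t'(s) + t(s')  (up to the harmless global scalar). *)
Section Model.
Variable F : fieldType.

Definition vecE (s t : 'rV[F]_2) : 'rV[F]_(2 + 2) := row_mx s t.

Definition qf (x y : 'rV[F]_(2 + 2)) : F :=
  (lsubmx x *m (rsubmx y)^T + lsubmx y *m (rsubmx x)^T) 0 0.

Definition isotropic m (A : 'M[F]_(m, 2 + 2)) : Prop :=
  forall x y : 'rV[F]_(2 + 2), (x <= A)%MS -> (y <= A)%MS -> qf x y = 0.

Definition max_isotropic m (A : 'M[F]_(m, 2 + 2)) : Prop :=
  isotropic A /\
  forall B : 'M[F]_(2 + 2), isotropic B -> (A <= B)%MS -> (B <= A)%MS.

Definition Lplus : 'M[F]_(2, 2 + 2) := row_mx 1%:M 0.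

(* The two families of maximal isotropic subspaces: U lies in the family of
   Lambda_+ (positive) iff dim (U ∩ Lambda_+) is even, otherwise negative. *)
Definition positive m (A : 'M[F]_(m, 2 + 2)) : Prop :=
  max_isotropic A /\ ~~ odd (\rank (A :&: Lplus)%MS).
Definition negative m (A : 'M[F]_(m, 2 + 2)) : Prop :=
  max_isotropic A /\ odd (\rank (A :&: Lplus)%MS).

(* omega in wedge^2 Lambda_+^* as a skew 2x2 matrix W:
   omega(a,b) = (a *m W *m b^T) 0 0, and  sigma ⌟ omega = sigma *m W  in Lambda_+^*. *)
Definition contr (s : 'rV[F]_2) (W : 'M[F]_2) : 'rV[F]_2 := s *m W.

End Model.

(* Main.v *)
Require Import Defs.
From HB Require Import structures.
From mathcomp Require Import all_boot all_order all_algebra.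
From mathcomp Require Import reals.
From mathcomp.real_closed Require Import complex.
From mathcomp Require Import ring.
Set Implicit Arguments. Unset Strict Implicit. Unset Printing Implicit Defensive.
Import Order.TTheory GRing.Theory Num.Theory.
Local Open Scope ring_scope.

Section Aux.
Variable K : fieldType.
Local Notation i1 := (lift ord0 (ord0 : 'I_1)).
Definition dot (a b : 'rV[K]_2) : K := (a *m b^T) 0 0.

Lemma sum2 (F : 'I_2 -> K) : \sum_i F i = F ord0 + F i1.
Proof. by rewrite !big_ord_recl big_ord0 addr0. Qed.

Lemma dotE a b : dot a b = a 0 ord0 * b 0 ord0 + a 0 i1 * b 0 i1.
Proof. by rewrite /dot !mxE sum2 !mxE. Qed.

Lemma rv2P (a b : 'rV[K]_2) : a 0 ord0 = b 0 ord0 -> a 0 i1 = b 0 i1 -> a = b.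
Proof.
move=> h0 h1; apply/rowP => j.
have -> : (0 : 'I_1) = ord0 by apply: val_inj.
case: j => [[|[|j]] Hj].
- by rewrite (_ : Ordinal Hj = ord0) //; apply: val_inj.
- by rewrite (_ : Ordinal Hj = i1) //; apply: val_inj.
- by [].
Qed.

Lemma mulmxE (s : 'rV[K]_2) (W : 'M[K]_2) j : (s *m W) 0 j = s 0 ord0 * W ord0 j + s 0 i1 * W i1 j.
Proof. by rewrite mxE sum2. Qed.

Lemma qfE a b c d : qf (vecE a b) (vecE c d) = dot a d + dot c b.
Proof. by rewrite /qf /vecE !row_mxKl !row_mxKr mxE. Qed.

Lemma vecEK x : vecE (lsubmx x) (rsubmx x) = x :> 'rV[K]_(2+2).
Proof. exact: hsubmxK. Qed.

Lemma vecED a b c d : vecE a b + vecE c d = vecE (a + c) (b + d) :> 'rV[K]_(2+2).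
Proof. by rewrite /vecE add_row_mx. Qed.
Lemma vecEZ k a b : k *: vecE a b = vecE (k *: a) (k *: b) :> 'rV[K]_(2+2).
Proof. by rewrite /vecE scale_row_mx. Qed.
Lemma vecEN a b : - vecE a b = vecE (- a) (- b) :> 'rV[K]_(2+2).
Proof. by rewrite /vecE opp_row_mx. Qed.
Lemma vecE_inj a b c d : vecE a b = vecE c d :> 'rV[K]_(2+2) -> a = c /\ b = d.
Proof. by move/eq_row_mx. Qed.
Lemma vecE0 : vecE 0 0 = 0 :> 'rV[K]_(2+2).
Proof. exact: row_mx0. Qed.

Lemma qfC x y : qf x y = qf y x :> K.
Proof. by rewrite -(vecEK x) -(vecEK y) !qfE addrC. Qed.

Lemma qfDl x1 x2 y : qf (x1 + x2) y = qf x1 y + qf x2 y :> K.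
Proof.
rewrite -(vecEK x1) -(vecEK x2) -(vecEK y) vecED !qfE /dot.
rewrite !linearD /= !mulmxDl !mxE. ring.
Qed.

Lemma qfZl k x y : qf (k *: x) y = k * qf x y :> K.
Proof.
rewrite -(vecEK x) -(vecEK y) vecEZ !qfE /dot.
rewrite !linearZ /= -?scalemxAl -?scalemxAr !mxE; ring.
Qed.

Lemma qfDr x y1 y2 : qf x (y1 + y2) = qf x y1 + qf x y2 :> K.
Proof. by rewrite qfC qfDl !(qfC x). Qed.
Lemma qfZr k x y : qf x (k *: y) = k * qf x y :> K.
Proof. by rewrite qfC qfZl qfC. Qed.

Lemma mx11Z (u : 'M[K]_1) (z : 'rV[K]_(2+2)) : u *m z = u 0 0 *: z.
Proof. by rewrite {1}[u]mx11_scalar mul_scalar_mx. Qed.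

Lemma max_iso_orth m (A : 'M[K]_(m, 2+2)) (z : 'rV[K]_(2+2)) :
  max_isotropic A -> qf z z = 0 -> (forall x, (x <= A)%MS -> qf x z = 0) ->
  (z <= A)%MS.
Proof.
move=> [isoA maxA] hzz hAz.
have isoB : isotropic (A + z)%MS.
  move=> x y /sub_addsmxP [[u1 u2] ->] /sub_addsmxP [[v1 v2] ->] /=.
  rewrite !mx11Z !qfDl !qfDr !qfZl !qfZr hzz isoA ?submxMl //.
  rewrite hAz ?submxMl // (qfC z) hAz ?submxMl //; ring.
exact: submx_trans (addsmxSr A z) (maxA _ isoB (addsmxSl A z)).
Qed.

Lemma sub_Lplus (x : 'rV[K]_(2+2)) : (x <= Lplus K)%MS = (rsubmx x == 0).
Proof.
apply/idP/idP.
  by case/submxP=> D ->; rewrite /Lplus mul_mx_row row_mxKr mulmx0.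
move/eqP=> h; rewrite -(vecEK x) h /vecE.
have -> : row_mx (lsubmx x) (0 : 'rV[K]_2) = lsubmx x *m Lplus K.
  by rewrite /Lplus mul_mx_row mulmx1 mulmx0.
exact: submxMl.
Qed.

Lemma rv_neq0 (a : 'rV[K]_2) : a != 0 -> a 0 ord0 != 0 \/ a 0 i1 != 0.
Proof.
move=> ha; case: (eqVneq (a 0 ord0) 0) => h0; last by left.
case: (eqVneq (a 0 i1) 0) => h1; last by right.
by move: ha; rewrite (_ : a = 0) ?eqxx //; apply: rv2P; rewrite !mxE.
Qed.

Lemma col_lemma (a b : 'rV[K]_2) : a != 0 ->
  a 0 ord0 * b 0 i1 = a 0 i1 * b 0 ord0 -> exists k, b = k *: a.
Proof.
move=> /rv_neq0 [h0|h1] h.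
  exists (b 0 ord0 / a 0 ord0); apply: rv2P; rewrite !mxE.
    by field.
  apply: (mulfI h0); rewrite h; field; done.
exists (b 0 i1 / a 0 i1); apply: rv2P; rewrite !mxE; last by field.
apply: (mulfI h1); rewrite -h; field; done.
Qed.

Lemma dot_nondeg (b : 'rV[K]_2) : (forall e, dot e b = 0) -> b = 0.
Proof.
move=> h; apply: rv2P.
  by move: (h (delta_mx 0 ord0)); rewrite dotE !mxE /= => e; rewrite ?mxE -e; ring.
by move: (h (delta_mx 0 i1)); rewrite dotE !mxE /= => e; rewrite ?mxE -e; ring.
Qed.

Section W2.
Variable W : 'M[K]_2.
Hypotheses (hW00 : W ord0 ord0 = 0) (hW11 : W i1 i1 = 0)
  (hW10 : W i1 ord0 = - W ord0 i1) (hw : W ord0 i1 != 0).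
Local Notation w := (W ord0 i1).

Lemma cW0 (s : 'rV[K]_2) : (s *m W) 0 ord0 = - w * s 0 i1.
Proof. by rewrite mulmxE hW00 hW10; ring. Qed.
Lemma cW1 (s : 'rV[K]_2) : (s *m W) 0 i1 = w * s 0 ord0.
Proof. by rewrite mulmxE hW11; ring. Qed.

Lemma aW_neq0 (a : 'rV[K]_2) : a != 0 -> a *m W != 0.
Proof.
move=> /rv_neq0 h; apply/eqP => e.
have e0 := congr1 (fun m : 'rV[K]_2 => m 0 ord0) e.
have e1 := congr1 (fun m : 'rV[K]_2 => m 0 i1) e.
move: e0 e1; rewrite /= cW0 cW1 !mxE => /eqP e0 /eqP e1.
move: e0 e1; rewrite !mulf_eq0 oppr_eq0 (negbTE hw) /=.
by case: h => /negbTE -> .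
Qed.

Lemma perp (a b : 'rV[K]_2) : a != 0 -> dot a b = 0 -> exists k, b = k *: (a *m W).
Proof.
move=> ha hd; apply: col_lemma; first exact: aW_neq0.
move: hd; rewrite dotE !cW0 !cW1 => hd.
apply/eqP; rewrite -subr_eq0; apply/eqP.
transitivity (- w * (a 0 ord0 * b 0 ord0 + a 0 i1 * b 0 i1)); first ring.
by rewrite hd mulr0.
Qed.

Lemma perpW (a b : 'rV[K]_2) : a != 0 -> dot (a *m W) b = 0 -> exists k, b = k *: a.
Proof.
move=> ha hd; apply: col_lemma => //.
move: hd; rewrite dotE !cW0 !cW1 => hd.
apply: (mulfI hw); apply/eqP; rewrite -subr_eq0; apply/eqP.
transitivity ((- w * a 0 i1) * b 0 ord0 + (w * a 0 ord0) * b 0 i1); first ring.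
by rewrite hd.
Qed.

Lemma dot_skew (a b : 'rV[K]_2) : dot a (b *m W) + dot b (a *m W) = 0.
Proof. by rewrite !dotE !cW0 !cW1; ring. Qed.
Lemma dot_self (a : 'rV[K]_2) : dot a (a *m W) = 0.
Proof. by rewrite !dotE !cW0 !cW1; ring. Qed.
Lemma dotWW (a b : 'rV[K]_2) : dot (a *m W) (b *m W) = w ^+ 2 * dot a b.
Proof. by rewrite !dotE !cW0 !cW1; ring. Qed.
Lemma WW (a : 'rV[K]_2) : (a *m W) *m W = - w ^+ 2 *: a.
Proof. by apply: rv2P; rewrite ?cW0 ?cW1 ?cW0 ?cW1 !mxE; ring. Qed.
End W2.

Lemma dotC (a b : 'rV[K]_2) : dot a b = dot b a.
Proof. by rewrite !dotE; ring. Qed.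
Lemma dot0l (a : 'rV[K]_2) : dot 0 a = 0.
Proof. by rewrite !dotE !mxE; ring. Qed.
Lemma dot0r (a : 'rV[K]_2) : dot a 0 = 0.
Proof. by rewrite !dotE !mxE; ring. Qed.
Lemma dotZl k (a b : 'rV[K]_2) : dot (k *: a) b = k * dot a b.
Proof. by rewrite !dotE !mxE; ring. Qed.
Lemma dotZr k (a b : 'rV[K]_2) : dot a (k *: b) = k * dot a b.
Proof. by rewrite !dotE !mxE; ring. Qed.

Lemma ord2P (P : 'I_2 -> Prop) : P ord0 -> P i1 -> forall j, P j.
Proof.
move=> h0 h1 [[|[|j]] Hj] //.
- by rewrite (_ : Ordinal Hj = ord0) //; apply: val_inj.
- by rewrite (_ : Ordinal Hj = i1) //; apply: val_inj.
Qed.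

Lemma mx2P (A B : 'M[K]_2) : A ord0 ord0 = B ord0 ord0 -> A ord0 i1 = B ord0 i1 ->
  A i1 ord0 = B i1 ord0 -> A i1 i1 = B i1 i1 -> A = B.
Proof.
move=> h00 h01 h10 h11; apply/matrixP.
by apply: ord2P; apply: ord2P.
Qed.

End Aux.

Unset Implicit Arguments.
Set Strict Implicit.
Theorem lemma10p2 (R : realType)
  (W : 'M[R[i]]_2) (hWskew : W^T = - W) (hW0 : W != 0)
  (sigma' : 'rV[R[i]]_2) (hs'0 : sigma' != 0)
  (Lminus : 'M[R[i]]_(2 + 2)) (hLm : negative Lminus)
  (hLmLp : (Lplus R[i] :&: Lminus == vecE sigma' 0)%MS)
  (sigma tau : 'rV[R[i]]_2) (hv0 : vecE sigma tau != 0)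
  (hviso : qf (vecE sigma tau) (vecE sigma tau) = 0)
  (lam : option R[i])
  (hlam : match lam with
          | Some l => sigma != 0 /\ tau = l *: contr sigma W
          | None => sigma = 0
          end)
  (U : 'M[R[i]]_(2 + 2)) (hU : positive U) (hvU : (vecE sigma tau <= U)%MS) :
  (U :&: Lminus ==
     match lam with
     | Some l => vecE sigma' (l *: contr sigma' W)
     | None => vecE 0 (contr sigma' W)
     end)%MS.
Proof.
rewrite /contr in hlam *.
pose i1 := lift ord0 (ord0 : 'I_1).
have two0 (x : R[i]) : x + x = 0 -> x = 0.
  by move/eqP; rewrite -mulr2n mulrn_eq0 /= => /eqP.
have hW00 : W ord0 ord0 = 0.
  apply: two0; have := congr1 (fun M : 'M_2 => M ord0 ord0) hWskew.
  by rewrite /= !mxE => h; rewrite {1}h addNr.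
have hW11 : W i1 i1 = 0.
  apply: two0; have := congr1 (fun M : 'M_2 => M i1 i1) hWskew.
  by rewrite /= !mxE => h; rewrite {1}h addNr.
have hW10 : W i1 ord0 = - W ord0 i1.
  by have := congr1 (fun M : 'M_2 => M ord0 i1) hWskew; rewrite /= !mxE.
have hw : W ord0 i1 != 0.
  apply: contra hW0 => /eqP h; apply/eqP; apply: mx2P; rewrite !mxE //.
  by rewrite hW10 h oppr0.
have perp' := perp hW00 hW11 hW10 hw.
have perpW' := perpW hW00 hW11 hW10 hw.
have aW0 := aW_neq0 hW00 hW11 hW10 hw.
have skew := dot_skew hW00 hW11 hW10.
have dself := dot_self hW00 hW11 hW10.
have dWW := dotWW hW00 hW11 hW10.
have WW' := WW hW00 hW11 hW10.
have iso2 (x : 'rV[R[i]]_(2+2)) : qf x x = 0 -> dot (lsubmx x) (rsubmx x) = 0.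
  by rewrite -{1 2}(vecEK x) qfE => /two0.
case: hLm => [[isoLm maxLm] _].
case/andP: hLmLp => hcap1 hcap2.
have capP x : (x <= Lplus R[i])%MS -> (x <= Lminus)%MS -> exists k, x = k *: vecE sigma' 0.
  move=> h1 h2; apply/sub_rVP; apply: submx_trans hcap1.
  by rewrite sub_capmx h1 h2.
have z0Lm : (vecE sigma' 0 <= Lminus)%MS := submx_trans hcap2 (capmxSr _ _).
have Lm_struct x : (x <= Lminus)%MS -> exists al be,
    x = vecE (al *: sigma') (be *: (sigma' *m W)).
  move=> hx; rewrite -(vecEK x) in hx *.
  move: (lsubmx x) (rsubmx x) hx => a b hx.
  have hb : dot sigma' b = 0.
    by have := isoLm _ _ hx z0Lm; rewrite qfE dot0r add0r.
  have hab : dot a b = 0.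
    by have := iso2 _ (isoLm _ _ hx hx); rewrite /vecE row_mxKl row_mxKr.
  case: (perp' _ _ hs'0 hb) => be hbe; subst b.
  case: (eqVneq be 0) => hbe0.
    subst be; rewrite scale0r in hx *.
    case: (capP _ _ hx) => [|k]; first by rewrite sub_Lplus /vecE row_mxKr.
    rewrite vecEZ scaler0 => /vecE_inj [-> _]; exists k, 0; by rewrite scale0r.
  move: hab; rewrite dotZr => /eqP; rewrite mulf_eq0 (negbTE hbe0) /= => /eqP hab.
  rewrite dotC in hab; case: (perpW' _ _ hs'0 hab) => al ->.
  by exists al, be.
have z1Lm : (vecE 0 (sigma' *m W) <= Lminus)%MS.
  apply: (max_iso_orth (conj isoLm maxLm)); first by rewrite qfE dot0l add0r.
  move=> x /Lm_struct [al [be ->]].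
  by rewrite qfE dotZl dself mulr0 dot0l addr0.
case: hU => [[isoU maxU] evenU].
have rle : (\rank (U :&: Lplus R[i]) <= 2)%N.
  apply: leq_trans (mxrankS (capmxSr U _)) _; exact: rank_leq_row.
have vecLp a : (vecE a 0 <= Lplus R[i])%MS.
  by rewrite sub_Lplus /vecE row_mxKr.
have subU (x y : 'rV[R[i]]_(2+2)) (k : R[i]) : (x <= U)%MS -> (y <= U)%MS -> ((x + k *: y)%R <= U)%MS.
  by move=> hx hy; apply: addmx_sub => //; apply: scalemx_sub.
have capS (T : 'rV[R[i]]_(2+2)) : (forall x, (x <= U)%MS -> (x <= Lminus)%MS -> exists k, x = k *: T) ->
    (U :&: Lminus <= T)%MS.
  move=> h; apply/row_subP => j; apply/sub_rVP; apply: h.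
    exact: submx_trans (row_sub j _) (capmxSl _ _).
  exact: submx_trans (row_sub j _) (capmxSr _ _).
have [r0|r2] : (\rank (U :&: Lplus R[i]) = 0 \/ \rank (U :&: Lplus R[i]) = 2)%N.
    by move: rle evenU; case: (\rank _) => [|[|[|n]]] //=; auto.
  have U0 a : (vecE a 0 <= U)%MS -> a = 0.
    move=> ha; have : (vecE a 0 <= U :&: Lplus R[i])%MS by rewrite sub_capmx ha vecLp.
    move/eqP: r0; rewrite mxrank_eq0 => /eqP ->; rewrite submx0 -vecE0 => /eqP.
    by case/vecE_inj.
  case: lam hlam => [l [hs htau] | hs].
    have hl : l != 0.
      apply/eqP => hl0; move: hs; rewrite (U0 sigma) ?eqxx //.
      by move: hvU; rewrite htau hl0 scale0r.
    have Ustr (x : 'rV[R[i]]_(2+2)) : (x <= U)%MS -> rsubmx x = l *: (lsubmx x *m W).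
      move=> hx; rewrite -(vecEK x) in hx; move: (lsubmx x) (rsubmx x) hx => a b hx.
      have hab : dot a b = 0.
        by have := iso2 _ (isoU _ _ hx hx); rewrite /vecE row_mxKl row_mxKr.
      have h1 : l * dot a (sigma *m W) + dot sigma b = 0.
        by have := isoU _ _ hx hvU; rewrite qfE htau dotZr.
      case: (eqVneq (dot sigma b) 0) => hd.
        case: (perp' _ _ hs hd) => c hc; subst b.
        have := subU _ _ (- (c / l)) hx hvU.
        rewrite vecEZ vecED htau scalerA mulNr (divfK hl) !scaleNr addrN => /U0.
        move/eqP; rewrite subr_eq0 => /eqP ->.
        by rewrite -scalemxAl scalerA mulrC divfK.
      have hb : b != 0 by apply: contra hd => /eqP ->; rewrite dot0r.
      rewrite dotC in hab; case: (perp' _ _ hb hab) => k hk; subst a.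
      move: h1; rewrite dotZl dWW (dotC b) => h1.
      have hk1 : l * (k * - W ord0 i1 ^+ 2) = 1.
        have : dot sigma b * (l * (k * W ord0 i1 ^+ 2) + 1) = 0.
          by rewrite -[RHS]h1; ring.
        move/eqP; rewrite mulf_eq0 (negbTE hd) /= addr_eq0 => /eqP h; by rewrite !mulrN h opprK.
      by rewrite -scalemxAl WW' !scalerA -mulrA hk1 scale1r.
    apply/andP; split.
      apply: capS => x hxU /Lm_struct [al [be hx]].
      exists al; move: (Ustr _ hxU); rewrite hx /vecE row_mxKr row_mxKl => hb.
      by rewrite hb scale_row_mx -scalemxAl !scalerA mulrC.
    rewrite sub_capmx; apply/andP; split.
      apply: (max_iso_orth (conj isoU maxU)).
        by rewrite qfE dotZr dself mulr0 addr0.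
      move=> x hx; rewrite -(vecEK x) (Ustr _ hx) qfE !dotZr.
      by rewrite -mulrDr skew mulr0.
    have -> : vecE sigma' (l *: (sigma' *m W)) = vecE sigma' 0 + l *: vecE 0 (sigma' *m W).
      by rewrite vecEZ vecED scaler0 addr0 add0r.
    by apply: addmx_sub => //; apply: scalemx_sub.
  have htau0 : tau != 0 by apply: contra hv0 => /eqP ->; rewrite hs vecE0.
  have Ul (x : 'rV[R[i]]_(2+2)) : (x <= U)%MS -> lsubmx x = 0.
    move=> hx; rewrite -(vecEK x) in hx; move: (lsubmx x) (rsubmx x) hx => a b hx.
    have hab : dot a b = 0.
      by have := iso2 _ (isoU _ _ hx hx); rewrite /vecE row_mxKl row_mxKr.
    have h1 : dot tau a = 0.
      by have := isoU _ _ hx hvU; rewrite qfE hs dot0l addr0 dotC.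
    case: (perp' _ _ htau0 h1) => k hk; subst a.
    case: (eqVneq k 0) => [->|hk0]; first by rewrite scale0r.
    move: hab; rewrite dotZl => /eqP; rewrite mulf_eq0 (negbTE hk0) /= => /eqP hab.
    case: (perpW' _ _ htau0 hab) => m hm; subst b.
    have := subU _ _ (- m) hx hvU.
    by rewrite vecEZ vecED hs scaler0 addr0 !scaleNr addrN => /U0.
  apply/andP; split.
    apply: capS => x hxU /Lm_struct [al [be hx]].
    exists be; move: (Ul _ hxU); rewrite hx /vecE row_mxKl => ha.
    by rewrite ha scale_row_mx scaler0.
  rewrite sub_capmx z1Lm andbT.
  apply: (max_iso_orth (conj isoU maxU)); first by rewrite qfE dot0l add0r.
  by move=> x hx; rewrite -(vecEK x) (Ul _ hx) qfE !dot0l addr0.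
have U2 a : (vecE a 0 <= U)%MS.
  have h := (mxrank_leqif_sup (capmxSr U (Lplus R[i]))).2.
  have : (Lplus R[i] <= U :&: Lplus R[i])%MS.
    rewrite -h eqn_leq (mxrankS (capmxSr _ _)) /= r2; exact: rank_leq_row.
  move=> hL; exact: submx_trans (vecLp a) (submx_trans hL (capmxSl _ _)).
have Ur (x : 'rV[R[i]]_(2+2)) : (x <= U)%MS -> rsubmx x = 0.
  move=> hx; apply: dot_nondeg => e.
  have := isoU _ _ (U2 e) hx; rewrite -{1}(vecEK x) qfE dot0r addr0 => h; exact: h.
case: lam hlam => [l [hs htau] | hs].
  have hl : l = 0.
    have := Ur _ hvU; rewrite /vecE row_mxKr htau => /eqP; rewrite scaler_eq0.
    by rewrite (negbTE (aW0 _ hs)) orbF => /eqP.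
  subst l; rewrite scale0r; apply/andP; split.
    apply: capS => x hxU /Lm_struct [al [be hx]].
    exists al; move: (Ur _ hxU); rewrite hx /vecE row_mxKr => hb.
    by rewrite scale_row_mx hb scaler0.
  by rewrite sub_capmx U2 z0Lm.
exfalso; move: hv0; rewrite hs.
have -> : tau = 0.
  apply: dot_nondeg => e; have := isoU _ _ (U2 e) hvU.
  by rewrite qfE hs dot0r addr0.
by rewrite vecE0 eqxx.
Qed.
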